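(* Let $n\ge1$ and let $D$ be the set of all linear orders $q$ on $[n]$ such that for every triple $i<j<k$ in $[n]$, $i$ is not ranked last among $\{i,j,k\}$ in $q$ and $k$ is not ranked first among $\{i,j,k\}$ in $q$. Then $|D|=F_{n+1}$, where $F_1=F_2=1$ and $F_{m}=F_{m-1}+F_{m-2}$ are the Fibonacci numbers.
   Context: Linear orders on $[n]$ are rankings of the alternatives $1,\dots,n$; ''ranked last/first among $\{i,j,k\}$'' refers to the restriction of the order to these three alternatives. *)

(* Defs.v *)
From mathcomp Require Import all_boot all_fingroup.
Set Implicit Arguments. Unset Strict Implicit. Unset Printing Implicit Defensive.

Fixpoint fib (m : nat) : nat :=
  match m with
  | 0 => 0
  | 1 => 1
  | (m'.+1 as m1).+1 => fib m1 + fib m'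
  end.

(* A linear order on the n alternatives 'I_n (= {0,...,n-1}, standing for
   {1,...,n}) is represented by a permutation q : {perm 'I_n}, where q a is the
   rank (position) of alternative a: rank 0 is first (top), rank n-1 is last. *)

Definition ranked_last n (q : {perm 'I_n}) (a b c : 'I_n) : bool :=
  (q b < q a) && (q c < q a).

Definition ranked_first n (q : {perm 'I_n}) (a b c : 'I_n) : bool :=
  (q a < q b) && (q a < q c).

Definition D n : {set {perm 'I_n}} :=
  [set q : {perm 'I_n} | [forall i : 'I_n, forall j : 'I_n, forall k : 'I_n,
     ((i < j) && (j < k)) ==>
       (~~ ranked_last q i j k && ~~ ranked_first q k i j)]].

(* Main.v *)
Require Import Defs.
From mathcomp Require Import all_boot all_fingroup zify.
Set Implicit Arguments. Unset Strict Implicit. Unset Printing Implicit Defensive.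

Fixpoint tilings (n : nat) : seq (seq nat) :=
  match n with
  | 0 => [:: [::]]
  | 1 => [:: [::]]
  | (m.+1 as m1).+1 => tilings m1 ++ map (cons m) (tilings m)
  end.

Fixpoint good (n : nat) (t : seq nat) : bool :=
  if t is a :: t' then (a.+1 < n) && good a t' else true.

Lemma size_tilings n : size (tilings n) = fib n.+1 /\ size (tilings n.+1) = fib n.+2.
Proof.
elim: n => [|n [IH1 IH2]] //; split=> //.
by rewrite /= size_cat size_map IH1 IH2 addnC.
Qed.

Lemma good_mono n m t : n <= m -> good n t -> good m t.
Proof. by case: t => //= a t' nm /andP[an ->]; rewrite (leq_trans an nm). Qed.

Lemma good_bound n t b : good n t -> b \in t -> b.+1 < n.
Proof.
elim: t n => //= a t IH n /andP[an gt]; rewrite inE => /orP[/eqP->//|bt].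
by have := IH _ gt bt => h; apply: ltn_trans h (ltnW an).
Qed.

Lemma tilings_good n t : t \in tilings n -> good n t.
Proof.
suff: (forall t, t \in tilings n -> good n t) /\ (forall t, t \in tilings n.+1 -> good n.+1 t).
  by case=> H _; apply: H.
elim: n {t} => [|n [IH1 IH2]]; first by split=> t; rewrite inE => /eqP->.
split=> // t; rewrite /= mem_cat => /orP[/IH2 H|/mapP[t' /IH1 H ->]].
  exact: good_mono H.
by rewrite /= ltnSn.
Qed.

Lemma nil_tilings n : [::] \in tilings n.
Proof.
suff: [::] \in tilings n /\ [::] \in tilings n.+1 by case.
elim: n => [|n [IH1 IH2]] //; split=> //=; by rewrite mem_cat IH2.
Qed.

Lemma good_tilings n t : good n t -> t \in tilings n.
Proof.
elim: n {-2}n (leqnn n) t => [|N IH] n hn t.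
  by case: t => [|a t] /=; [rewrite nil_tilings | move: hn; case: n => //].
case: t => [|a t]; first by rewrite nil_tilings.
case: n hn => [|[|m]] // hn.
have -> : tilings m.+2 = tilings m.+1 ++ map (cons m) (tilings m) by [].
move=> /andP[am gt].
rewrite mem_cat; case: (ltngtP a m) => [lam|mla|eam].
- apply/orP; left; apply: IH; first lia.
  by apply/andP; split; [lia | exact: gt].
- lia.
- apply/orP; right; apply/mapP; exists t; last by rewrite eam.
  by apply: IH; [lia | rewrite -eam].
Qed.

Lemma uniq_tilings n : uniq (tilings n).
Proof.
suff: uniq (tilings n) /\ uniq (tilings n.+1) by case.
elim: n => [|n [IH1 IH2]] //; split=> //.
have -> : tilings n.+2 = tilings n.+1 ++ map (cons n) (tilings n) by [].
rewrite cat_uniq IH2 map_inj_uniq ?IH1 ?andbT; last by move=> x y [].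
apply/hasPn => t /mapP[t' _ ->]; apply/negP => /tilings_good /= /andP[]; lia.
Qed.

Lemma good_sorted n t : good n t -> sorted gtn t.
Proof.
elim: t n => //= a [|b t] IH n //= /andP[an /andP[ba gt]].
rewrite (ltnW ba) /=; apply: (IH a); by rewrite /= ba gt.
Qed.

Lemma sorted_good n t : sorted gtn t -> (forall a, a \in t -> a.+1 < n) ->
  (forall a, a \in t -> a.+1 \notin t) -> good n t.
Proof.
elim: t n => //= a t IH n st hb ha.
rewrite hb ?mem_head //=; apply: IH.
- exact: path_sorted st.
- move=> b bt.
  have tr : transitive gtn by move=> x y z /= h1 h2; apply: ltn_trans h2 h1.
  have := order_path_min tr st => /allP/(_ _ bt) /= ba.
  have := ha b; rewrite inE bt orbT => /(_ isT); rewrite inE negb_or => /andP[/eqP nb _].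
  lia.
- by move=> b bt; have := ha b; rewrite inE bt orbT => /(_ isT); rewrite inE negb_or => /andP[].
Qed.

Definition sw (t : seq nat) (a : nat) : nat :=
  if a \in t then a.+1 else if (0 < a) && (a.-1 \in t) then a.-1 else a.

Definition fT N (t : seq nat) : {perm 'I_N.+1} :=
  (\prod_(i <- t) tperm (inord i) (inord i.+1))%g.

Lemma sw_disp t a : sw t a <= a.+1 /\ a <= (sw t a).+1.
Proof. rewrite /sw; case: ifP => _; [|case: ifP => _]; lia. Qed.

Lemma in_sw t a : (a \in t) = (sw t a == a.+1).
Proof.
rewrite /sw; case: ifP => _; first by rewrite eqxx.
by case: ifP => _; apply/esym/eqP; lia.
Qed.

Lemma fT_eval N t : good N.+1 t -> forall x : 'I_N.+1, val (fT N t x) = sw t x.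
Proof.
rewrite /fT; elim: t => [|y t IH] gt x.
  by rewrite big_nil perm1 /sw in_nil andbF.
move: gt => /= /andP[yN gyt].
have gt : good N.+1 t by apply: good_mono gyt; lia.
have hb := good_bound gyt.
have ny1 : y.+1 \in t = false by apply/negP => /hb; lia.
have ny : y \in t = false by apply/negP => /hb; lia.
rewrite big_cons permM.
have [xy|[xy1|[xny xny1]]] : (x:nat) = y \/ (x:nat) = y.+1 \/ ((x:nat) <> y /\ (x:nat) <> y.+1) by lia.
- have -> : x = inord y by apply: val_inj; rewrite /= inordK //; lia.
  rewrite tpermL IH // inordK; last lia.
  by rewrite /sw ny1 /= ny inordK ?inE ?eqxx //; lia.
- have -> : x = inord y.+1 by apply: val_inj; rewrite /= inordK //; lia.
  rewrite tpermR IH // inordK; last lia.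
  rewrite /sw ny /= inordK; last lia.
  rewrite !inE ny1 eqxx /= orbF.
  have -> : (y.+1 == y) = false by apply/eqP; lia.
  case: (ltnP 0 y) => //= yp.
  by have -> : (y.-1 \in t) = false by apply/negP => /hb; lia.
- rewrite tpermD; first last.
  + by apply/eqP => e; have := congr1 val e; rewrite /= inordK; lia.
  + by apply/eqP => e; have := congr1 val e; rewrite /= inordK; lia.
  rewrite IH // /sw !inE.
  have -> : ((x:nat) == y) = false by apply/eqP.
  case: ifP => //= _.
  case: (ltnP 0 x) => //= xp.
  by have -> : (x.-1 == y) = false by apply/eqP; lia.
Qed.

Lemma disp_D N (q : {perm 'I_N.+1}) :
  (forall a : 'I_N.+1, q a <= a.+1 /\ a <= (q a).+1) -> q \in D N.+1.
Proof.
move=> H; rewrite inE; apply/forallP => i; apply/forallP => j; apply/forallP => k.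
apply/implyP => /andP[ij jk]; rewrite /ranked_last /ranked_first.
have [h1 _] := H i; have [_ h3] := H k.
have -> : (q k < q i) = false by apply/negbTE; rewrite -leqNgt; lia.
by rewrite andbF.
Qed.

Lemma card_lt n k : #|[set j : 'I_n | j < k]| = minn k n.
Proof.
case: (leqP k n) => hk.
  have -> : [set j : 'I_n | j < k] = widen_ord hk @: [set: 'I_k].
    apply/setP => j; rewrite inE; apply/idP/imsetP => [jk | [y _ ->]].
      by exists (Ordinal jk) => //; apply: val_inj.
    by rewrite /= ltn_ord.
  rewrite card_imset ?cardsT ?card_ord; first lia.
  by move=> x y e; apply: val_inj; exact: (congr1 val e).
have -> : [set j : 'I_n | j < k] = setT.
  by apply/setP => j; rewrite !inE (ltn_trans (ltn_ord j) hk).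
rewrite cardsT card_ord; lia.
Qed.

Lemma card_below n (q : {perm 'I_n}) a : #|[set j | q j < q a]| = q a.
Proof.
have -> : [set j | q j < q a] = (q^-1)%g @: [set y : 'I_n | y < q a].
  apply/setP => j; rewrite inE; apply/idP/imsetP => [h | [y yin ->]].
    by exists (q j); rewrite ?inE ?permK.
  by rewrite permKV; move: yin; rewrite inE.
rewrite card_imset; last exact: perm_inj.
rewrite card_lt; have := ltn_ord (q a); lia.
Qed.

Lemma Dp n (q : {perm 'I_n}) : q \in D n -> forall i j k : 'I_n, i < j -> j < k ->
  ~~ ranked_last q i j k && ~~ ranked_first q k i j.
Proof.
rewrite inE => /forallP H i j k ij jk.
by have := H i => /forallP /(_ j) /forallP /(_ k) /implyP; apply; rewrite ij jk.
Qed.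

Lemma D_disp n (q : {perm 'I_n}) : q \in D n -> forall a : 'I_n, q a <= a.+1 /\ a <= (q a).+1.
Proof.
move=> qD a; split.
- rewrite -card_below.
  have sub : [set j | q j < q a] \subset [set j : 'I_n | j < a] :|: [set j : 'I_n | (a < j) && (q j < q a)].
    apply/subsetP => j; rewrite !inE => h; case: (ltngtP j a) => //= ja.
    by move: h; rewrite (val_inj ja) ltnn.
  have B : #|[set j : 'I_n | (a < j) && (q j < q a)]| <= 1.
    rewrite leqNgt; apply/negP => /card_gt1P [x [y [xin yin xy]]].
    move: xin yin; rewrite !inE => /andP[ax qx] /andP[ay qy].
    case: (ltngtP x y) => [h|h|h].
    + by have := Dp qD ax h; rewrite /ranked_last qx qy.
    + by have := Dp qD ay h; rewrite /ranked_last qx qy.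
    + by move: xy; rewrite (val_inj h) eqxx.
  have := subset_leq_card sub; have := leq_card_setU [set j : 'I_n | j < a] [set j : 'I_n | (a < j) && (q j < q a)].
  rewrite card_lt => [[h1 _]] h2; apply: leq_trans h2 _; apply: leq_trans h1 _; have := leq_add (geq_minl a n) B; by rewrite addn1.
- have sub : [set j : 'I_n | j < a] \subset [set j | q j < q a] :|: [set j : 'I_n | (j < a) && (q a < q j)].
    apply/subsetP => j; rewrite !inE => h; rewrite h /=.
    case: (ltngtP (q j) (q a)) => //= e.
    by move: h; rewrite (perm_inj (val_inj e)) ltnn.
  have B : #|[set j : 'I_n | (j < a) && (q a < q j)]| <= 1.
    rewrite leqNgt; apply/negP => /card_gt1P [x [y [xin yin xy]]].
    move: xin yin; rewrite !inE => /andP[ax qx] /andP[ay qy].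
    case: (ltngtP x y) => [h|h|h].
    + have := Dp qD h ay; rewrite /ranked_first => /andP[_ /negP H]; apply: H; apply/andP; split; [exact: qx | exact: qy].
    + have := Dp qD h ax; rewrite /ranked_first => /andP[_ /negP H]; apply: H; apply/andP; split; [exact: qy | exact: qx].
    + by move: xy; rewrite (val_inj h) eqxx.
  have := subset_leq_card sub; have := leq_card_setU [set j | q j < q a] [set j : 'I_n | (j < a) && (q a < q j)].
  rewrite card_lt card_below => [[h1 _]] h2.
  have m : minn a n = a by apply/minn_idPl; exact: ltnW (ltn_ord a).
  rewrite m in h2; apply: leq_trans h2 (leq_trans h1 _). apply: leq_trans (leq_add (leqnn (q a)) B) _; by rewrite addn1.
Qed.

Lemma chainP (g : nat -> nat) N :
  (forall a b, a <= N -> b <= N -> g a = g b -> a = b) ->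
  (forall a, a <= N -> g a <= a.+1 /\ a <= (g a).+1) ->
  forall m, m < N -> g m.+1 = m -> g m = m.+1.
Proof.
move=> inj d; elim=> [|m IH] hm h.
  have [d1 _] := d 0 (leq0n _).
  have ne : g 0 <> 0 by move=> e; have := inj 0 1 (leq0n _) hm; rewrite e h => /(_ erefl).
  lia.
have [d1 d2] := d m.+1 (ltnW hm).
have ne1 : g m.+1 <> m.+1.
  by move=> e; have := inj m.+1 m.+2 (ltnW hm) hm; rewrite e h => /(_ erefl); lia.
have [e|ne] := eqVneq (g m.+1) m; last lia.
have := IH (ltnW hm) e => e2.
by have := inj m m.+2 (ltnW (ltnW hm)) hm; rewrite e2 h => /(_ erefl); lia.
Qed.

Section Constr.
Variables (N : nat) (q : {perm 'I_N.+1}).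
Hypothesis qD : q \in D N.+1.

Let g a := nat_of_ord (q (inord a)).
Let gi a := nat_of_ord ((q^-1)%g (inord a)).

Lemma g_gi a b : a <= N -> b <= N -> (g a == b) = (gi b == a).
Proof.
move=> ha hb; rewrite /g /gi.
apply/eqP/eqP => e.
- have -> : inord b = q (inord a) by apply: val_inj; rewrite /= inordK.
  by rewrite permK inordK.
- have -> : inord a = (q^-1)%g (inord b) by apply: val_inj; rewrite /= inordK.
  by rewrite permKV inordK.
Qed.

Lemma g_inj a b : a <= N -> b <= N -> g a = g b -> a = b.
Proof.
by move=> ha hb e; have := congr1 val (perm_inj (val_inj e)); rewrite /= !inordK.
Qed.

Lemma gi_inj a b : a <= N -> b <= N -> gi a = gi b -> a = b.
Proof.
by move=> ha hb e; have := congr1 val (perm_inj (val_inj e)); rewrite /= !inordK.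
Qed.

Lemma g_disp a : a <= N -> g a <= a.+1 /\ a <= (g a).+1.
Proof. by move=> ha; have := D_disp qD (inord a); rewrite /g inordK. Qed.

Lemma g_bound a : g a <= N.
Proof. by rewrite /g -ltnS ltn_ord. Qed.

Lemma gi_bound a : gi a <= N.
Proof. by rewrite /gi -ltnS ltn_ord. Qed.

Lemma gi_disp a : a <= N -> gi a <= a.+1 /\ a <= (gi a).+1.
Proof.
move=> ha; have hb := gi_bound a.
have : g (gi a) == a by rewrite g_gi // eqxx.
move/eqP => e; have := g_disp hb; rewrite e; lia.
Qed.

Lemma P1 m : m < N -> g m.+1 = m -> g m = m.+1.
Proof. exact: (chainP g_inj g_disp). Qed.

Lemma P2 m : m < N -> g m = m.+1 -> g m.+1 = m.
Proof.
move=> hm /eqP; rewrite g_gi //; last lia.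
move/eqP/(chainP gi_inj gi_disp hm)/eqP.
rewrite -g_gi //; [by move/eqP | lia].
Qed.

Definition tq := [seq a <- rev (iota 0 N.+1) | g a == a.+1].

Lemma mem_tq a : (a \in tq) = (g a == a.+1) && (a < N.+1).
Proof. by rewrite mem_filter mem_rev mem_iota. Qed.

Lemma tq_good : good N.+1 tq.
Proof.
apply: sorted_good.
- apply: sorted_filter; first by move=> x y z /= h1 h2; apply: ltn_trans h2 h1.
  by rewrite rev_sorted; exact: iota_ltn_sorted.
- move=> a; rewrite mem_tq => /andP[/eqP e _]; have := g_bound a; lia.
- move=> a; rewrite !mem_tq => /andP[/eqP e ha]; apply/negP => /andP[/eqP e1 _].
  have := g_bound a; have hN : a < N by have := g_bound a; lia.
  have := P2 hN e; lia.
Qed.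

Lemma fT_tq : fT N tq = q.
Proof.
apply/permP => x; apply: val_inj; rewrite fT_eval ?tq_good //.
have -> : q x = q (inord x) by rewrite inord_val.
change (val (q (inord x))) with (g x).
rewrite /sw !mem_tq ltn_ord andbT.
have hx : (x : nat) <= N by rewrite -ltnS ltn_ord.
have [d1 d2] := g_disp hx.
case: (eqVneq (g x) x.+1) => [-> //|ne] /=.
case: (ltnP 0 x) => [xp|x0] /=; last first.
  have e : x = 0 :> nat by lia.
  move: ne d1; rewrite e; lia.
have hx1 : x.-1 < N by lia.
rewrite (_ : x.-1 < N.+1); last lia.
rewrite andbT.
case: eqP => [e|ne2].
  by have := P2 hx1 e; rewrite prednK.
have : g x <> x.-1.
  move=> e; apply: ne2; apply: P1 => //; rewrite prednK //.
lia.
Qed.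

End Constr.

Theorem proposition3 (n : nat) : 1 <= n -> #|D n| = fib n.+1.
Proof.
case: n => // N _.
have tr : transitive gtn by move=> x y z /= h1 h2; apply: ltn_trans h2 h1.
have E : D N.+1 =i map (fT N) (tilings N.+1).
  move=> q; apply/idP/mapP => [qD | [t tt ->]].
    exists (tq q); last by rewrite fT_tq.
    exact/good_tilings/tq_good.
  apply: disp_D => a; rewrite fT_eval; last exact: tilings_good.
  exact: sw_disp.
rewrite (eq_card E) (card_uniqP _) ?size_map; first by case: (size_tilings N.+1).
rewrite map_inj_in_uniq ?uniq_tilings // => t1 t2 t1T t2T e.
have g1 := tilings_good t1T; have g2 := tilings_good t2T.
apply: (irr_sorted_eq tr) (good_sorted g1) (good_sorted g2) _; first by move=> x /=; rewrite ltnn.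
move=> a; case: (ltnP a N.+1) => ha.
  rewrite !in_sw.
  have -> : sw t1 a = val (fT N t1 (inord a)) by rewrite fT_eval // inordK.
  have -> : sw t2 a = val (fT N t2 (inord a)) by rewrite fT_eval // inordK.
  by rewrite e.
have -> : (a \in t1) = false by apply/negP => /(good_bound g1); lia.
have -> : (a \in t2) = false by apply/negP => /(good_bound g2); lia.
by [].
Qed.
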